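(* Assume ${\bf v}$ has the RCI property and is completely irrational. Then $$\Xi_{\bf v}=\bigcup_{J\subset\{1,\dots,d\}}\big\{\mathcal{L}^J_{{\bf v},x}: x\in\mathtt X^J_{\bf v}\big\}\;\cup\;\bigcup_{i=1}^d\Xi_{{\bf v}\setminus i},$$ and consequently $$\Xi_{\bf v}=\bigcup_{\emptyset\neq I\subset\{1,\dots,d\}}\ \bigcup_{J\subset I}\big\{\mathcal{L}^J_{{\bf v}_I,x}: x\in\mathtt X^J_{{\bf v}_I}\big\}\;\cup\;\{\mathbb{Z}^D\}.$$
   Context: Let $D\ge d\ge1$ be integers and ${\bf v}=\{v_1,\dots,v_d\}$ a set of linearly independent unit vectors in $\mathbb{R}^D$. For $I\subset\{1,\dots,d\}$ write ${\bf v}_I=\{v_i\}_{i\in I}$, ${\bf v}\setminus i:={\bf v}_{\{1,\dots,d\}\setminus\{i\}}$, $\mathcal{L}_{{\bf v}_I}:=\{n\in\mathbb{Z}^D: v_i\cdot n\ge0\ \forall i\in I\}$ (so $\mathcal{L}_{{\bf v}_\emptyset}=\mathbb{Z}^D$, $\mathcal{L}_{\bf v}:=\mathcal{L}_{{\bf v}_{\{1,\dots,d\}}}$), $A_{{\bf v}_I}z=(v_i\cdot z)_{i\in I}$, and $\mathcal{X}_{{\bf v}_I}:=\overline{A_{{\bf v}_I}(\mathcal{L}_{{\bf v}_I})}\subset[0,\infty)^I$. Subsets of $\mathbb{Z}^D$ carry the Fell topology (= product topology on $\{0,1\}^{\mathbb{Z}^D}$). $\Xi_{{\bf v}_I}:=\overline{\{\mathcal{L}_{{\bf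 v}_I}-n: n\in\mathcal{L}_{{\bf v}_I}\}}$, $\Xi_\emptyset=\{\mathbb{Z}^D\}$, $\Xi_{\bf v}:=\Xi_{{\bf v}_{\{1,\dots,d\}}}$. For nonempty $I$, ${\bf v}_I$ is rational (R) if $A_{{\bf v}_I}(\mathcal{L}_{{\bf v}_I})$ is a closed, discrete, finitely generated subsemigroup of $[0,\infty)^I$, and completely irrational (CI) if $\mathcal{X}_{{\bf v}_I}=[0,\infty)^I$; ${\bf v}$ has the RCI property if every ${\bf v}_I$ with $\emptyset\neq I\subsetneq\{1,\dots,d\}$ is R or CI. For $J\subset I$, $x\in\mathbb{R}^I$: $\mathcal{L}^J_{{\bf v}_I,x}:=\{n\in\mathbb{Z}^D: v_k\cdot n+x_k>0\ (k\in J),\ v_k\cdot n+x_k\ge0\ (k\in I\setminus J)\}$; $\mathtt X^\emptyset_{{\bf v}_I}:=\mathcal{X}_{{\bf v}_I}$ and for $J\ne\emptyset$, $\mathtt X^J_{{\bf v}_I}:=\{x\in\mathcal{X}_{{\bf v}_I}:\forall k\in J\ \exists n\in\mathbb{Z}^D,\ x_k=v_k\cdot n\neq0\}$; $\mathtt X^J_{\bf v}$ is the case $I=\{1,\dots,d\}$. *)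

(* Defs.v *)
From HB Require Import structures.
From mathcomp Require Import all_boot all_order all_algebra.
From mathcomp Require Import all_classical all_reals all_analysis.
Set Implicit Arguments. Unset Strict Implicit. Unset Printing Implicit Defensive.
Import Order.TTheory GRing.Theory Num.Theory.
Import numFieldNormedType.Exports.
Local Open Scope classical_set_scope.
Local Open Scope ring_scope.

Definition ZD (D : nat) := 'rV[int]_D.

(* Subsets of Z^D as indicator functions Z^D -> bool; the type ZD D -> bool
   carries the product topology of the discrete space bool, i.e. the Fell
   topology on subsets of Z^D. *)
Definition subZ (D : nat) := ZD D -> bool.

Definition RdT (R : realType) (d : nat) : 'I_d -> topologicalType := fun _ => R.
Definition BoolT (D : nat) : ZD D -> topologicalType := fun _ => bool.

Section Defs.
Variables (R : realType) (d D : nat) (V : 'M[R]_(d, D)).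
(* row i of V is the vector v_i *)

Definition vdot (i : 'I_d) (n : ZD D) : R := \sum_(j < D) V i j * (n 0 j)%:~R.

(* L^J_{v_I,x} ;  coordinates of x outside I are irrelevant *)
Definition LJ (I J : {set 'I_d}) (x : 'I_d -> R) : subZ D :=
  fun n => [forall k in I, if k \in J then 0 < vdot k n + x k
                           else 0 <= vdot k n + x k].

Definition Lv (I : {set 'I_d}) : subZ D :=
  fun n => [forall k in I, 0 <= vdot k n].

(* A_{v_I} z, embedded in R^d with zeros outside I (R^I identified with
   {x : 'I_d -> R | x k = 0 for k \notin I}) *)
Definition Av (I : {set 'I_d}) (n : ZD D) : 'I_d -> R :=
  fun k => if k \in I then vdot k n else 0.

Definition AvL (I : {set 'I_d}) : set ('I_d -> R) :=
  [set Av I n | n in [set n | Lv I n]].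

Definition Xv (I : {set 'I_d}) : set ('I_d -> R) :=
  closure (AvL I : set (prod_topology (@RdT R d))).

Definition orthant (I : {set 'I_d}) : set ('I_d -> R) :=
  [set x : 'I_d -> R | forall k, if k \in I then 0 <= x k else x k == 0].

Definition XJ (I J : {set 'I_d}) : set ('I_d -> R) :=
  [set x | Xv I x /\ forall k, k \in J -> exists n : ZD D, x k = vdot k n /\ x k != 0].

Definition shiftZ (S : subZ D) (n : ZD D) : subZ D := fun m => S (m + n).

Definition Xi (I : {set 'I_d}) : set (subZ D) :=
  if I == finset.set0 then [set (fun _ => true)]
  else closure ([set shiftZ (Lv I) n | n in [set n | Lv I n]]
                : set (prod_topology (@BoolT D))).

Definition CI (I : {set 'I_d}) : Prop := Xv I = orthant I.

Definition discrete_set (T : topologicalType) (S : set T) : Prop :=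
  forall y, S y -> exists U, nbhs y U /\ U `&` S = [set y].

Definition rational (I : {set 'I_d}) : Prop :=
  [/\ closed (AvL I : set (prod_topology (@RdT R d))),
      discrete_set (AvL I : set (prod_topology (@RdT R d))),
      AvL I `<=` orthant I &
      exists gs : seq ('I_d -> R),
        AvL I = [set x | exists c : 'I_(size gs) -> nat,
                   x = (fun k => \sum_(i < size gs) (c i)%:R * (nth 0 gs i) k)]].

Definition RCI : Prop :=
  forall I : {set 'I_d}, I != finset.set0 -> I != [set: 'I_d]%SET -> rational I \/ CI I.
End Defs.

Definition unit_lin_indep (R : realType) (d D : nat) (V : 'M[R]_(d, D)) : Prop :=
  row_free V /\ forall i : 'I_d, \sum_(j < D) V i j ^+ 2 = 1.

(* Main.v *)
Require Import Defs.
From HB Require Import structures.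
From mathcomp Require Import all_boot all_order all_algebra.
From mathcomp Require Import all_classical all_reals all_analysis.
From mathcomp Require Import lra.
Set Implicit Arguments. Unset Strict Implicit. Unset Printing Implicit Defensive.
Import Order.TTheory GRing.Theory Num.Theory.
Import numFieldNormedType.Exports.
Local Open Scope classical_set_scope.
Local Open Scope ring_scope.
Section Prod.
Context (Ix : eqType) (T : Ix -> topologicalType).

Lemma prod_cyl_nbhs (f : prod_topology T) (s : seq Ix) (W : forall i, set (T i)) :
  (forall i, i \in s -> nbhs (f i) (W i)) ->
  nbhs f [set g : prod_topology T | forall i, i \in s -> W i (g i)].
Proof.
elim: s => [|i s IH] H.
  by apply: filterS (@filterT _ _ _) => g _ i.
have H1 : nbhs f [set g : prod_topology T | W i (g i)].
  have := @proj_continuous Ix T i f (W i) (H i (mem_head _ _)).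
  by [].
have H2 := IH (fun j js => H j (ltac:(by rewrite inE js orbT))).
apply: filterS (filterI H1 H2) => g [g1 g2] j; rewrite inE => /orP[/eqP->|js].
  exact: g1.
exact: g2.
Qed.

Definition cylF (f : prod_topology T) : set_system (prod_topology T) :=
  [set U | exists (s : seq Ix) (W : forall i, set (T i)),
     (forall i, i \in s -> nbhs (f i) (W i)) /\
     [set g : prod_topology T | forall i, i \in s -> W i (g i)] `<=` U].

Lemma cylF_filter f : Filter (cylF f).
Proof.
split.
- exists [::], (fun _ => setT); split => //.
- move=> P Q [s1 [W1 [H1 S1]]] [s2 [W2 [H2 S2]]].
  exists (s1 ++ s2), (fun i => (if i \in s1 then W1 i else setT) `&` (if i \in s2 then W2 i else setT)).
  split.
    move=> i _; apply: filterI.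
      by case: ifP => [/H1 //|_]; apply: filterT.
    by case: ifP => [/H2 //|_]; apply: filterT.
  move=> g Hg; split.
    by apply: S1 => i is1; have := Hg i; rewrite mem_cat is1 /= => /(_ isT) [].
  by apply: S2 => i is2; have := Hg i; rewrite mem_cat is2 orbT => /(_ isT) [_].
- by move=> P Q PQ [s [W [H S]]]; exists s, W; split => //; apply: subset_trans PQ.
Qed.

Lemma prod_nbhs_cyl (f : prod_topology T) (U : set (prod_topology T)) :
  nbhs f U -> exists (s : seq Ix) (W : forall i, set (T i)),
     (forall i, i \in s -> nbhs (f i) (W i)) /\
     [set g : prod_topology T | forall i, i \in s -> W i (g i)] `<=` U.
Proof.
move=> nU.
have F := cylF_filter f.
suff : cylF f --> f by move=> /(_ U nU).
apply/cvg_sup => i A /=.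
move=> [_ [[B Bop <-] Bfs sBfA]].
pose W := fun j => [set y : T j | forall e : i = j, B (eq_rect j T y i (esym e))].
have Wi : forall y, W i y <-> B y.
  move=> y; split; first by move/(_ erefl).
  by move=> By e; rewrite (eq_irrelevance e erefl).
exists [:: i], W; split.
  move=> j; rewrite inE => /eqP ->.
  apply: (@filterS _ _ _ B); first by move=> y /Wi.
  exact: open_nbhs_nbhs.
move=> g /(_ i (mem_head _ _)) /Wi Bg; exact: sBfA.
Qed.
End Prod.
Lemma nbhsR_ball (R : realType) (y : R) (W : set R) :
  nbhs y W <-> exists2 e, 0 < e & forall z, `|z - y| < e -> W z.
Proof.
rewrite nbhs_ballP; split => -[e e0 H]; exists e => // z.
  by move=> hz; apply: H; rewrite /ball /= distrC.
by rewrite /ball /= distrC => /H.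
Qed.

Lemma fin_eps (R : realType) (T : eqType) (s : seq T) (P : T -> R -> Prop) :
  (forall t e e', 0 < e' -> e' <= e -> P t e -> P t e') ->
  (forall t, t \in s -> exists2 e, 0 < e & P t e) ->
  exists2 e, 0 < e & forall t, t \in s -> P t e.
Proof.
move=> mono; elim: s => [|t s IH] H; first by exists 1.
have [e1 e10 P1] := H t (mem_head _ _).
have [e2 e20 P2] := IH (fun u us => H u (ltac:(by rewrite inE us orbT))).
have m0 : 0 < Num.min e1 e2 by rewrite lt_min e10 e20.
exists (Num.min e1 e2) => // u; rewrite inE => /orP[/eqP->|us].
  by apply: mono P1 => //; rewrite ge_min lexx.
by apply: (mono _ e2) (P2 _ us) => //; rewrite ge_min lexx orbT.
Qed.

Section Main.
Variables (R : realType) (d D : nat) (V : 'M[R]_(d, D)).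
Local Notation vd := (vdot V).
Local Notation full := [set: 'I_d]%SET.

Lemma vdotD k m n : vd k (m + n) = vd k m + vd k n.
Proof. by rewrite /vdot -big_split /=; apply: eq_bigr => j _; rewrite mxE intrD mulrDr. Qed.

Lemma vdotN k n : vd k (- n) = - vd k n.
Proof. by rewrite /vdot -sumrN; apply: eq_bigr => j _; rewrite mxE intrN mulrN. Qed.

Lemma bnd_vd (s : seq (ZD D)) : exists M : R, forall m, m \in s -> forall k, `|vd k m| <= M.
Proof.
elim: s => [|t s [M IH]]; first by exists 0.
exists (Num.max M (\sum_k `|vd k t|)) => m; rewrite inE => /orP[/eqP->|ms] k.
  rewrite le_max; apply/orP; right.
  by rewrite (bigD1 k) //= lerDl sumr_ge0.
by rewrite le_max (IH _ ms k).
Qed.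

Lemma dens (hCI : CI V full) (y : 'I_d -> R) (e : R) :
  (forall k, 0 <= y k) -> 0 < e ->
  exists n, Lv V full n /\ forall k, `|vd k n - y k| < e.
Proof.
move=> y0 e0.
have : Xv V full y by rewrite hCI => k; rewrite inE; exact: y0.
pose W := fun k : 'I_d => ([set z : R | `|z - y k| < e] : set (@RdT R d k)).
have nW : nbhs (y : prod_topology (@RdT R d))
   [set g : prod_topology (@RdT R d) | forall i, i \in enum 'I_d -> W i (g i)].
  apply: prod_cyl_nbhs => i _; apply/nbhsR_ball; exists e => //.
move=> /(_ _ nW) [z [[n Ln <-] Hz]]; exists n; split => // k.
by have := Hz k (mem_enum _ k); rewrite /W /= /Av inE.
Qed.


Lemma vdot0 k : vd k 0 = 0.
Proof. by rewrite /vdot big1 // => j _; rewrite mxE mulr0. Qed.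

Lemma LJ0 J x : LJ V finset.set0 J x = (fun _ => true).
Proof. by apply: funext => m; apply/forallP => k; rewrite inE. Qed.

Lemma A_core (hCI : CI V full) (I0 I J : {set 'I_d}) (x : 'I_d -> R) :
  I \subset I0 -> (forall k, k \in I -> 0 <= x k) ->
  (forall k, k \in I -> k \in J -> 0 < x k) ->
  forall s : seq (ZD D), exists n, Lv V full n /\
     forall m, m \in s -> Lv V I0 (m + n) = LJ V I J x m.
Proof.
move=> sII0 x0 xJ s.
have [M HM] := bnd_vd s.
have [e1 e10 He1] : exists2 e, 0 < e & forall m, m \in s -> forall k, k \in I ->
    vd k m + x k != 0 -> e <= `|vd k m + x k|.
  apply: (fin_eps (P := fun m e => forall k, k \in I ->
    vd k m + x k != 0 -> e <= `|vd k m + x k|)).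
    by move=> m e e' _ le H k kI nz; apply: le_trans le (H k kI nz).
  move=> m _.
  have [e e0 He] := fin_eps (s := enum 'I_d) (P := fun k e => k \in I ->
    vd k m + x k != 0 -> e <= `|vd k m + x k|)
    (fun k e e' _ le H kI nz => le_trans le (H kI nz))
    (fun k _ => ltac:(case: (boolP (vd k m + x k != 0)) => nz;
        [exists `|vd k m + x k|; [by rewrite normr_gt0| by []]
        | by exists 1 => // _ H; rewrite H in nz])).

  by exists e => // k; apply: He; rewrite mem_enum.
have [e2 e20 He2] := fin_eps (s := enum 'I_d) (P := fun k e => k \in I ->
    k \in J -> e <= x k)
    (fun k e e' _ le H kI kJ => le_trans le (H kI kJ))
    (fun k _ => ltac:(case: (boolP ((k \in I) && (k \in J))) => /andP;
       [by case=> kI kJ; exists (x k) => //; apply: xJ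
       | by move=> nkIJ; exists 1 => // kI kJ; exfalso; apply: nkIJ])).
pose eps := Num.min e1 (Num.min e2 1).
have eps0 : 0 < eps by rewrite !lt_min e10 e20 ltr01.
have eps1 : eps <= e1 by rewrite ge_min lexx.
have eps2 : eps <= e2 by rewrite ge_min ge_min lexx orbT.
have eps3 : eps <= 1 by rewrite ge_min ge_min lexx !orbT.
pose M' := Num.max M 0 + 1.
have MM' : M <= M' - 1 by rewrite /M' addrK le_max lexx.
have M'0 : 0 <= M' by rewrite /M' addr_ge0 // le_max lexx orbT.
pose y := fun k => if k \in I then (if k \in J then x k - eps / 2 else x k + eps / 2)
                   else M'.
have y0 : forall k, 0 <= y k.
  move=> k; rewrite /y; case: ifP => kI; last by [].
  have := x0 k kI; case: ifP => kJ; last by lra.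
  by have := He2 k (mem_enum _ k) kI kJ; lra.
have eh : 0 < eps / 2 by rewrite divr_gt0.
have [n [Ln Hn]] := dens hCI y0 eh.
have HnI : forall k, k \in I -> k \in J -> x k - eps < vd k n < x k.
  by move=> k kI kJ; have := Hn k; rewrite /y kI kJ ltr_distl; lra.
have HnI' : forall k, k \in I -> k \notin J -> x k < vd k n < x k + eps.
  by move=> k kI /negbTE kJ; have := Hn k; rewrite /y kI kJ ltr_distl; lra.
have HnO : forall k, k \notin I -> M < vd k n.
  by move=> k /negbTE kI; have := Hn k; rewrite /y kI ltr_distl; lra.
exists n; split => // m ms.
apply/idP/idP.
- move=> /forallP H; apply/forallP => k; apply/implyP => kI.
  have := H k; rewrite (fintype.subsetP sII0 k kI) /= vdotD.
  case: ifP => kJ.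
    by have := HnI k kI kJ; lra.
  move=> h; case: (leP 0 (vd k m + x k)) => // neg.
  have nz : vd k m + x k != 0 by rewrite lt_eqF.
  have := He1 m ms k kI nz; rewrite ltr0_norm //.
  have := HnI' k kI (negbT kJ); lra.
- move=> /forallP H; apply/forallP => k; apply/implyP => kI0; rewrite vdotD.
  case: (boolP (k \in I)) => kI.
    have := H k; rewrite kI /=; case: ifP => kJ h.
      have nz : vd k m + x k != 0 by rewrite gt_eqF.
      have := He1 m ms k kI nz; rewrite gtr0_norm //.
      have := HnI k kI kJ; have := eps1; lra.
    by have := HnI' k kI (negbT kJ); lra.
  have := HnO k kI; have := HM m ms k; have := ler_norm (- vd k m).
  rewrite normrN; lra.
Qed.

Lemma Lv_full I n : Lv V full n -> Lv V I n.
Proof. by move=> /forallP H; apply/forallP => k; apply/implyP => _; have := H k; rewrite inE. Qed.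

Lemma A_Xi (hCI : CI V full) (I0 I J : {set 'I_d}) (x : 'I_d -> R) :
  I0 != finset.set0 -> I \subset I0 -> (forall k, k \in I -> 0 <= x k) ->
  (forall k, k \in I -> k \in J -> 0 < x k) ->
  Xi V I0 (LJ V I J x).
Proof.
move=> I00 sII0 x0 xJ; rewrite /Xi (negbTE I00).
move=> U /prod_nbhs_cyl [s [W [HW sub]]].
have [n [Ln Hn]] := A_core hCI sII0 x0 xJ s.
exists (shiftZ (Lv V I0) n); split; first by exists n => //; apply: Lv_full.
apply: sub => m ms; rewrite /shiftZ Hn //; exact: nbhs_singleton (HW m ms).
Qed.

Lemma Xv_orth I x : Xv V I x -> forall k, k \in I -> 0 <= x k.
Proof.
move=> Xx k kI; rewrite leNgt; apply/negP => xk.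
pose W := fun j : 'I_d => ([set z : R | z < 0] : set (@RdT R d j)).
have nW : nbhs (x : prod_topology (@RdT R d))
   [set g : prod_topology (@RdT R d) | forall i, i \in [:: k] -> W i (g i)].
  apply: prod_cyl_nbhs => i; rewrite inE => /eqP ->; apply/nbhsR_ball.
  exists (- x k); first by rewrite oppr_gt0.
  by move=> z; rewrite /W /= ltr_distl; lra.
have [z [[n Ln <-] Hz]] := Xx _ nW.
have := Hz k (mem_head _ _); rewrite /W /= /Av kI.
by move/forallP: Ln => /(_ k); rewrite kI /= => h1 h2; lra.
Qed.

Lemma orth_Xv (hCI : CI V full) I x : orthant I x -> Xv V I x.
Proof.
move=> ox U /prod_nbhs_cyl [s [W [HW sub]]].
have [e e0 He] := fin_eps (s := s) (P := fun i e => forall z, `|z - x i| < e -> W i z)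
  (fun i e e' _ le H z hz => H z (lt_le_trans hz le))
  (fun i iS => ltac:(by have /nbhsR_ball := HW i iS)).
have x0 : forall k, 0 <= x k.
  by move=> k; have := ox k; case: ifP => // _ /eqP ->.
have [n [Ln Hn]] := dens hCI x0 e0.
exists (Av V I n); split; first by exists n => //; apply: Lv_full.
apply: sub => i iS; rewrite /Av; case: ifP => iI.
  exact: He.
have := ox i; rewrite iI => /eqP <-; exact: nbhs_singleton (HW i iS).
Qed.

Lemma Xsub (hCI : CI V full) (fne : full != finset.set0) I0 S :
  Xi V I0 S -> Xi V full S.
Proof.
rewrite {1}/Xi; case: ifP => [_ ->|I00].
  rewrite -(LJ0 finset.set0 (fun _ => 0)); apply: (A_Xi hCI) => //.
  by move=> k; rewrite inE.
move=> HS.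
have AX : forall n, Lv V I0 n -> Xi V full (shiftZ (Lv V I0) n).
  move=> n Ln.
  have -> : shiftZ (Lv V I0) n = LJ V I0 finset.set0 (fun k => vd k n).
    apply: funext => m; rewrite /shiftZ /Lv /LJ; apply: eq_forallb => k.
    by rewrite inE vdotD.
  apply: (A_Xi hCI) => //.
    by move=> k kI; move/forallP: Ln => /(_ k); rewrite kI.
  by move=> k _; rewrite inE.
move: AX; rewrite /Xi (negbTE fne) => AX.
set X := closure _.
have : closed X by exact: closed_closure.
move/closure_id => ->.
apply: (closure_subset _ HS) => _ [n Ln <-]; exact: AX.
Qed.

Lemma B_char (fne : full != finset.set0) (S : subZ D) : Xi V full S ->
  exists (I J : {set 'I_d}) (x : 'I_d -> R),
   [/\ J \subset I, orthant I x,
       (forall k, k \in J -> exists n : ZD D, x k = vd k n /\ x k != 0) &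
       S = LJ V I J x].
Proof.
rewrite /Xi (negbTE fne) => HS.
have K : forall s : seq (ZD D), exists n, Lv V full n /\
    forall m, m \in s -> Lv V full (m + n) = S m.
  move=> s.
  pose W := fun m : ZD D => ([set S m] : set (@BoolT D m)).
  have nW : nbhs (S : prod_topology (@BoolT D))
      [set g : prod_topology (@BoolT D) | forall i, i \in s -> W i (g i)].
    by apply: prod_cyl_nbhs => i _; exact: discrete_set1.
  have [g [[n Ln <-] Hg]] := HS _ nW.
  by exists n; split => // m ms; have := Hg m ms.
have S0 : S 0.
  by have [n [Ln Hn]] := K [:: 0]; rewrite -Hn ?mem_head // add0r.
pose E := fun k => [set vd k m | m in [set m | S m]].
have E0 : forall k, E k (0 : R) by move=> k; exists 0 => //; exact: vdot0.
pose I : {set 'I_d} := [set k | `[< has_lbound (E k) >]]%SET.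
pose x := fun k => if k \in I then - inf (E k) else 0.
pose J : {set 'I_d} := [set k | (k \in I) && `[< ~ (exists m, S m /\ vd k m = - x k) >]
                   && `[< exists n, vd k n = x k >]]%SET.
have lbI : forall k m, k \in I -> S m -> 0 <= vd k m + x k.
  move=> k m kI Sm; rewrite /x kI subr_ge0.
  have hb : has_lbound (E k) by move: kI; rewrite inE => /asboolP.
  by apply: ge_inf hb _ _; exists m.
exists I, J, x; split.
- by apply/fintype.subsetP => k; rewrite inE => /andP[/andP[]].
- move=> k; case: ifP => kI; first by have := lbI k 0 kI S0; rewrite vdot0 add0r.
  by rewrite /x kI.
- move=> k; rewrite inE => /andP[/andP[kI /asboolP nat] /asboolP [n hn]].
  exists n; split => //; apply/eqP => x0; apply: nat; exists 0; split => //.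
  by rewrite vdot0 x0 oppr0.
apply: funext => m; apply/idP/idP.
- move=> Sm; apply/forallP => k; apply/implyP => kI.
  have h := lbI k m kI Sm; case: ifP => kJ //.
  rewrite lt_neqAle h andbT.
  move: kJ; rewrite inE kI /= => /andP[/asboolP nat _].
  apply/eqP => e; apply: nat; exists m; split => //; lra.
move=> H.
have wit : forall k, exists m', S m' /\ vd k m' <= vd k m.
  move=> k; case: (boolP (k \in I)) => kI.
    have hk := forallP H k; rewrite kI /= in hk.
    have a0 : 0 <= vd k m + x k by move: hk; case: ifP => _ // /ltW.
    case: (ltgtP 0 (vd k m + x k)) => [apos|aneg|azero].
    + have hb : has_lbound (E k) by move: kI; rewrite inE => /asboolP.
      have hi : has_inf (E k) by split => //; exists 0; exact: E0.
      have [e [m' Sm' <-] lt] := inf_adherent apos hi.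
      exists m'; split => //; rewrite /x kI in lt; lra.
    + lra.
    + have kJ : k \notin J.
        by apply/negP => kJ; move: hk; rewrite kJ -azero ltxx.
      move: kJ; rewrite inE kI /= negb_and => /orP[/asboolPn nat | /asboolPn nex].
        apply: contrapT => nex; apply: nat => -[m' [Sm' e]]; apply: nex.
        by exists m'; split => //; rewrite e; lra.
      by exfalso; apply: nex; exists (- m); rewrite vdotN; lra.
  have nb : ~ has_lbound (E k) by move: kI; rewrite inE => /asboolPn.
  apply: contrapT => nex; apply: nb; exists (vd k m) => _ [m' Sm' <-].
  rewrite leNgt; apply/negP => lt; apply: nex; exists m'; split => //.
  exact: ltW.
have [f Hf] := choice wit.
have [n [Ln Hn]] := K (m :: map f (enum 'I_d)).
rewrite -Hn ?mem_head //; apply/forallP => k; apply/implyP => _.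
have [Sf le] := Hf k.
have := Hn (f k) (ltac:(by rewrite inE map_f ?mem_enum ?orbT)).
rewrite Sf => /forallP /(_ k); rewrite inE /= !vdotD; lra.
Qed.


Lemma main_aux : (0 < d)%N -> CI V full ->
  Xi V full =
    [set S | exists (J : {set 'I_d}) (x : 'I_d -> R),
               XJ V full J x /\ S = LJ V full J x]
    `|` [set S | exists i : 'I_d, Xi V (full :\ i) S]
  /\
  Xi V full =
    [set S | exists (I J : {set 'I_d}) (x : 'I_d -> R),
               [/\ I != finset.set0, J \subset I, XJ V I J x & S = LJ V I J x]]
    `|` [set (fun _ : ZD D => true)].
Proof.
move=> d0 hCI.
have fne : full != finset.set0.
  by apply/set0Pn; exists (Ordinal d0); rewrite inE.
have Ztrue : Xi V full (fun _ => true).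
  rewrite -(LJ0 finset.set0 (fun _ => 0)); apply: (A_Xi hCI) => //.
  by move=> k; rewrite inE.
split; apply/seteqP; split.
- move=> S /(B_char fne) [I [J [x [JI ox xJ ->]]]].
  case: (boolP (I == full)) => [/eqP eI|nI].
    rewrite eI in ox *; left; exists J, x; split => //; split.
      exact: orth_Xv.
    exact: xJ.
  right.
  have [i _ iI] : exists2 i, i \in full & i \notin I.
    apply/subsetPn; apply: contra nI => sub; by rewrite finset.eqEsubset sub andbT finset.subsetT.
  exists i; rewrite /Xi; case: ifP => [/eqP e0|ne0].
    apply: funext => m; apply/forallP => k; apply/implyP => kI; exfalso.
    have : k \in (full :\ i) by rewrite !inE andbT; apply: contraNneq iI => <-.
    by rewrite e0 inE.
  have := @A_Xi hCI (full :\ i) I J x (negbT ne0).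
  rewrite /Xi ne0; apply.
  + apply/fintype.subsetP => k kI; rewrite !inE andbT.
    by apply: contraNneq iI => <-.
  + by move=> k kI; have := ox k; rewrite kI.
  + move=> k kI kJ; have := ox k; rewrite kI => h.
    have [_ [_ nz]] := xJ k kJ; by rewrite lt_neqAle eq_sym nz h.
- move=> S [[J [x [[Xx xJ] ->]]]|[i XiS]].
    apply: (A_Xi hCI) => //; first exact: Xv_orth Xx.
    move=> k kI kJ; have [_ [_ nz]] := xJ k kJ.
    by rewrite lt_neqAle eq_sym nz (Xv_orth Xx).
  exact: (Xsub hCI fne XiS).
- move=> S /(B_char fne) [I [J [x [JI ox xJ ->]]]].
  case: (boolP (I == finset.set0)) => [/eqP ->|nI].
    by right; rewrite LJ0.
  left; exists I, J, x; split => //; split => //; exact: orth_Xv.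
- move=> S [[I [J [x [nI JI [Xx xJ] ->]]]]|->] //.
  apply: (A_Xi hCI) => //.
  exact: Xv_orth Xx.
  move=> k kI kJ; have [_ [_ nz]] := xJ k kJ.
  by rewrite lt_neqAle eq_sym nz (Xv_orth Xx).
Qed.

End Main.

Theorem mainTheorem4 (R : realType) (d D : nat) (V : 'M[R]_(d, D)) :
  (0 < d)%N -> (d <= D)%N -> unit_lin_indep V ->
  RCI V -> CI V [set: 'I_d]%SET ->
  Xi V [set: 'I_d]%SET =
    [set S | exists (J : {set 'I_d}) (x : 'I_d -> R),
               XJ V [set: 'I_d]%SET J x /\ S = LJ V [set: 'I_d]%SET J x]
    `|` [set S | exists i : 'I_d, Xi V ([set: 'I_d]%SET :\ i) S]
  /\
  Xi V [set: 'I_d]%SET =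
    [set S | exists (I J : {set 'I_d}) (x : 'I_d -> R),
               [/\ I != finset.set0, J \subset I, XJ V I J x & S = LJ V I J x]]
    `|` [set (fun _ : ZD D => true)].
Proof. by move=> d0 _ _ _ hCI; apply: main_aux. Qed.
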